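(* In the real Euclidean plane, let $l_a,l_b,l_c,l_1,l_2,l_3,l_4$ be seven directed lines such that for each $i\in\{1,2,3,4\}$ the line $l_i$ meets each of $l_a,l_b,l_c$ in exactly one point, and put $A_i=l_a\cap l_i$, $B_i=l_b\cap l_i$, $C_i=l_c\cap l_i$. Then, with signed segment lengths, $$\begin{aligned} &A_1A_3\cdot A_2C_2\cdot A_4C_4\cdot B_1C_1\cdot B_2B_4\cdot B_3C_3+A_2A_4\cdot A_1C_1\cdot A_3C_3\cdot B_1B_3\cdot B_2C_2\cdot B_4C_4\\ &=A_3A_4\cdot A_1C_1\cdot A_2C_2\cdot B_1B_2\cdot B_3C_3\cdot B_4C_4+A_2A_3\cdot A_1C_1\cdot A_4C_4\cdot B_1B_4\cdot B_2C_2\cdot B_3C_3\\ &\quad+A_1A_2\cdot A_3C_3\cdot A_4C_4\cdot B_1C_1\cdot B_2C_2\cdot B_3B_4+A_1A_4\cdot A_2C_2\cdot A_3C_3\cdot B_1C_1\cdot B_2B_3\cdot B_4C_4. \end{aligned}$$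
   Context: Each segment $PQ$ appearing above lies on one of the directed lines: $A_iA_j$ on $l_a$, $B_iB_j$ on $l_b$, and $A_iC_i$, $B_iC_i$ on $l_i$. Its signed length $PQ$ equals $|PQ|$ if the direction from $P$ to $Q$ agrees with the direction of the line it lies on, and $-|PQ|$ otherwise (and $0$ if $P=Q$). *)

(* Defs.v *)
From HB Require Import structures.
From mathcomp Require Import all_boot all_order all_algebra.
Set Implicit Arguments. Unset Strict Implicit. Unset Printing Implicit Defensive.
Import Order.TTheory GRing.Theory Num.Theory.
Local Open Scope ring_scope.

Definition point (R : rcfType) := (R * R)%type.

Record dline (R : rcfType) := DLine {
  base : point R;
  dir : point R;
  dir_nz : dir != (0, 0)
}.

Definition on_line (R : rcfType) (l : dline R) (P : point R) : Prop :=
  exists t : R, P = ((base l).1 + t * (dir l).1, (base l).2 + t * (dir l).2).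

Definition meet_once (R : rcfType) (l m : dline R) : Prop :=
  exists P : point R, on_line l P /\ on_line m P /\
    forall Q : point R, on_line l Q -> on_line m Q -> Q = P.

Definition vnorm (R : rcfType) (v : point R) : R := Num.sqrt (v.1 ^+ 2 + v.2 ^+ 2).

Definition slen (R : rcfType) (l : dline R) (P Q : point R) : R :=
  let v := (Q.1 - P.1, Q.2 - P.2) in
  if v == (0, 0) then 0
  else if 0 < v.1 * (dir l).1 + v.2 * (dir l).2 then vnorm v else - vnorm v.

(* Main.v *)
Require Import Defs.
From HB Require Import structures.
From mathcomp Require Import all_boot all_order all_algebra.
From mathcomp Require Import ring.
Import Order.TTheory GRing.Theory Num.Theory.
Local Open Scope ring_scope.
Set Implicit Arguments. Unset Strict Implicit.

Lemma slen_lin (R : rcfType) (l : dline R) (P Q : point R) (lam : R) :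
  Q.1 - P.1 = lam * (dir l).1 -> Q.2 - P.2 = lam * (dir l).2 ->
  slen l P Q = lam * vnorm (dir l).
Proof.
rewrite /slen /vnorm; have nz := dir_nz l.
move: nz; case: (dir l) => d1 d2 /= nz h1 h2; rewrite h1 h2 /=.
have e : (lam * d1) ^+ 2 + (lam * d2) ^+ 2 = lam ^+ 2 * (d1 ^+ 2 + d2 ^+ 2) by ring.
rewrite e sqrtrM ?sqr_ge0 // sqrtr_sqr.
have [->|lnz] := eqVneq lam 0.
  by rewrite !mul0r eqxx.
have hnz : (lam * d1, lam * d2) != (0, 0).
  move: nz; rewrite !xpair_eqE !mulf_eq0 (negbTE lnz) /=; by [].
rewrite (negbTE hnz).
have Spos : 0 < d1 ^+ 2 + d2 ^+ 2.
  have sq : forall x : R, x != 0 -> 0 < x ^+ 2.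
    by move=> x hx; rewrite lt_def sqr_ge0 andbT sqrf_eq0.
  move: nz; rewrite xpair_eqE negb_and => /orP [] h.
    by rewrite ltr_pwDl ?sqr_ge0 ?sq.
  by rewrite ltr_pwDr ?sqr_ge0 ?sq.
have -> : lam * d1 * d1 + lam * d2 * d2 = (d1 ^+ 2 + d2 ^+ 2) * lam by ring.
rewrite pmulr_rgt0 //.
case: (ltrP 0 lam) => hl.
  by rewrite gtr0_norm.
by rewrite ler0_norm // mulNr opprK.
Qed.

Definition cr (R : rcfType) (u v : point R) := u.1 * v.2 - u.2 * v.1.

Lemma lin4 (R : comRingType) (c1 c2 c3 c4 : R) {x y a1 b1 a2 b2 a3 b3 a4 b4 : R} :
  a1 = b1 -> a2 = b2 -> a3 = b3 -> a4 = b4 ->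
  x - y = c1 * (a1 - b1) + c2 * (a2 - b2) + c3 * (a3 - b3) + c4 * (a4 - b4) -> x = y.
Proof.
move=> -> -> -> -> h; apply/eqP; rewrite -subr_eq0 h !subrr !mulr0 !addr0 //.
Qed.

Arguments lin4 {R} c1 c2 c3 c4 {x y a1 b1 a2 b2 a3 b3 a4 b4}.

Lemma not_par (R : rcfType) (l m : dline R) :
  meet_once l m -> cr (dir l) (dir m) != 0.
Proof.
case: l => [[b1 b2] [d1 d2] nzl]; case: m => [[c1 c2] [e1 e2] nzm].
rewrite /cr /=.
move=> [P [[t ht] [[u hu] hU]]] /=.
apply/negP => /eqP hc.
have [k [hk1 hk2]] : exists k, d1 = k * e1 /\ d2 = k * e2.
  move: (nzm); rewrite xpair_eqE negb_and => /orP [] h.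
    exists (d1 / e1); split; first by rewrite divfK.
    apply: (mulIf h); transitivity (d1 * e2).
      by move/eqP: hc; rewrite subr_eq0 => /eqP ->.
    by field.
  exists (d2 / e2); split; last by rewrite divfK.
  apply: (mulIf h); transitivity (d2 * e1).
    by move/eqP: hc; rewrite subr_eq0 => /eqP <-.
  by field.
have hQ : (P.1 + d1, P.2 + d2) = P.
  apply: hU.
  exists (t + 1); rewrite ht /=; congr pair; ring.
  exists (u + k); rewrite hu /= hk1 hk2; congr pair; ring.
have e1' : d1 = 0 by apply: (@addrI _ P.1); rewrite addr0; exact: (congr1 fst hQ).
have e2' : d2 = 0 by apply: (@addrI _ P.2); rewrite addr0; exact: (congr1 snd hQ).
by move: (nzl); rewrite e1' e2' eqxx.
Qed.

Lemma per_index (R : rcfType) (la lb lc l : dline R) (A B C : point R) :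
  meet_once l lc -> on_line la A -> on_line l A -> on_line lb B -> on_line l B ->
  on_line lc C -> on_line l C ->
  exists s t lam mu : R,
   A = ((base la).1 + s * (dir la).1, (base la).2 + s * (dir la).2) /\
       B = ((base lb).1 + t * (dir lb).1, (base lb).2 + t * (dir lb).2) /\
       slen l A C = lam * vnorm (dir l) /\ slen l B C = mu * vnorm (dir l) /\
       cr (dir l) (dir lc) * lam = cr ((base lc).1 - (base la).1, (base lc).2 - (base la).2) (dir lc)
           - cr (dir la) (dir lc) * s /\
       cr (dir l) (dir lc) * mu = cr ((base lc).1 - (base lb).1, (base lc).2 - (base lb).2) (dir lc)
           - cr (dir lb) (dir lc) * t /\
     cr (dir l) (dir lc) != 0.
Proof.
move=> hm [s hAa] [u hAl] [t hBb] [w hBl] [g hCc] [v hCl].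
exists s, t, (v - u), (v - w); split; first by []. split; first by []. split; [|split; [|split; [|split]]].
- by apply: slen_lin; rewrite hCl hAl /=; ring.
- by apply: slen_lin; rewrite hCl hBl /=; ring.
- have eC1 := congr1 fst hCl; rewrite hCc /= in eC1.
  have eC2 := congr1 snd hCl; rewrite hCc /= in eC2.
  have eA1 := congr1 fst hAl; rewrite hAa /= in eA1.
  have eA2 := congr1 snd hAl; rewrite hAa /= in eA2.
  apply: (lin4 (- (dir lc).2) (dir lc).1 (dir lc).2 (- (dir lc).1) eC1 eC2 eA1 eA2).
  rewrite /cr /=; ring.
- have eC1 := congr1 fst hCl; rewrite hCc /= in eC1.
  have eC2 := congr1 snd hCl; rewrite hCc /= in eC2.
  have eA1 := congr1 fst hBl; rewrite hBb /= in eA1.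
  have eA2 := congr1 snd hBl; rewrite hBb /= in eA2.
  apply: (lin4 (- (dir lc).2) (dir lc).1 (dir lc).2 (- (dir lc).1) eC1 eC2 eA1 eA2).
  rewrite /cr /=; ring.
- exact: not_par.
Qed.

Lemma AA_lin (R : rcfType) (la : dline R) (P Q : point R) (si sj : R) :
  P = ((base la).1 + si * (dir la).1, (base la).2 + si * (dir la).2) ->
  Q = ((base la).1 + sj * (dir la).1, (base la).2 + sj * (dir la).2) ->
  slen la P Q = (sj - si) * vnorm (dir la).
Proof. by move=> -> ->; apply: slen_lin => /=; ring. Qed.

Theorem theorem11 (R : rcfType) (la lb lc : dline R) (l : 'I_4 -> dline R)
    (A B C : 'I_4 -> point R) :
  (forall i, meet_once (l i) la /\ meet_once (l i) lb /\ meet_once (l i) lc) ->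
  (forall i, on_line la (A i) /\ on_line (l i) (A i)) ->
  (forall i, on_line lb (B i) /\ on_line (l i) (B i)) ->
  (forall i, on_line lc (C i) /\ on_line (l i) (C i)) ->
  let AA i j := slen la (A i) (A j) in
  let BB i j := slen lb (B i) (B j) in
  let AC i := slen (l i) (A i) (C i) in
  let BC i := slen (l i) (B i) (C i) in
  let i1 : 'I_4 := inord 0 in let i2 : 'I_4 := inord 1 in
  let i3 : 'I_4 := inord 2 in let i4 : 'I_4 := inord 3 in
  AA i1 i3 * AC i2 * AC i4 * BC i1 * BB i2 i4 * BC i3
  + AA i2 i4 * AC i1 * AC i3 * BB i1 i3 * BC i2 * BC i4
  = AA i3 i4 * AC i1 * AC i2 * BB i1 i2 * BC i3 * BC i4
  + AA i2 i3 * AC i1 * AC i4 * BB i1 i4 * BC i2 * BC i3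
  + AA i1 i2 * AC i3 * AC i4 * BC i1 * BC i2 * BB i3 i4
  + AA i1 i4 * AC i2 * AC i3 * BC i1 * BB i2 i3 * BC i4.
Proof.
move=> Hm HA HB HC AA BB AC BC i1 i2 i3 i4.
have PI k := per_index (Hm k).2.2 (HA k).1 (HA k).2 (HB k).1 (HB k).2 (HC k).1 (HC k).2.
have [s1 [t1 [l1 [m1 [hA1 [hB1 [hAC1 [hBC1 [hr1 [hq1 nz1]]]]]]]]]] := PI i1.
have [s2 [t2 [l2 [m2 [hA2 [hB2 [hAC2 [hBC2 [hr2 [hq2 nz2]]]]]]]]]] := PI i2.
have [s3 [t3 [l3 [m3 [hA3 [hB3 [hAC3 [hBC3 [hr3 [hq3 nz3]]]]]]]]]] := PI i3.
have [s4 [t4 [l4 [m4 [hA4 [hB4 [hAC4 [hBC4 [hr4 [hq4 nz4]]]]]]]]]] := PI i4.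
rewrite /AA /BB /AC /BC.
rewrite (AA_lin hA1 hA3) (AA_lin hA2 hA4) (AA_lin hA3 hA4) (AA_lin hA2 hA3)
        (AA_lin hA1 hA2) (AA_lin hA1 hA4).
rewrite (AA_lin hB2 hB4) (AA_lin hB1 hB3) (AA_lin hB1 hB2) (AA_lin hB1 hB4)
        (AA_lin hB3 hB4) (AA_lin hB2 hB3).
rewrite hAC1 hAC2 hAC3 hAC4 hBC1 hBC2 hBC3 hBC4.
set r1 := cr (dir (l i1)) (dir lc) in hr1 hq1 nz1.
set r2 := cr (dir (l i2)) (dir lc) in hr2 hq2 nz2.
set r3 := cr (dir (l i3)) (dir lc) in hr3 hq3 nz3.
set r4 := cr (dir (l i4)) (dir lc) in hr4 hq4 nz4.
set Na := vnorm (dir la). set Nb := vnorm (dir lb).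
set N1 := vnorm (dir (l i1)). set N2 := vnorm (dir (l i2)).
set N3 := vnorm (dir (l i3)). set N4 := vnorm (dir (l i4)).
have nz : r1 * r2 * r3 * r4 != 0 by rewrite !mulf_neq0.
apply: (mulfI nz).
apply/eqP; rewrite -subr_eq0 -mulrBr; apply/eqP.
transitivity (Na * Nb * N1 * N2 * N3 * N4  *  ((s3 - s1) * (t4 - t2) * (r2 * l2) * (r4 * l4) * (r1 * m1) * (r3 * m3)
   + (s4 - s2) * (t3 - t1) * (r1 * l1) * (r3 * l3) * (r2 * m2) * (r4 * m4)
   - ((s4 - s3) * (t2 - t1) * (r1 * l1) * (r2 * l2) * (r3 * m3) * (r4 * m4)
    + (s3 - s2) * (t4 - t1) * (r1 * l1) * (r4 * l4) * (r2 * m2) * (r3 * m3)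
    + (s2 - s1) * (t4 - t3) * (r3 * l3) * (r4 * l4) * (r1 * m1) * (r2 * m2)
    + (s4 - s1) * (t3 - t2) * (r2 * l2) * (r3 * l3) * (r1 * m1) * (r4 * m4)))).
  ring.
rewrite hr1 hr2 hr3 hr4 hq1 hq2 hq3 hq4.
ring.
Qed.
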